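(* Let $N\ge2$. Then there exist a unital complex algebra $A$ and $F\in\mathcal G_N^{dif}(A)$ such that if $G,H\in\mathcal G_N^{dif}(A)$ satisfy $(G\circ F)^j(z)=z_j$ and $(F\circ H)^j(z)=z_j$ for all $j$, then $G\neq H$; that is, the left and right substitutional inverses of a power series are in general distinct.
   Context: Let $A$ be a unital complex algebra and $z_1,\dots,z_N$ non-commuting variables commuting with elements of $A$; for a word $w=w(1)\cdots w(p)$ over $\{1,\dots,N\}$ put $z_w=z_{w(1)}\cdots z_{w(p)}$. $\mathcal G_N^{dif}(A)$ is the set of $N$-tuples $F=(F^1,\dots,F^N)$ of formal power series $F^j(z)=z_j+\sum_{|u|\ge2}f_u^jz_u$, $f_u^j\in A$; put $f_k^j=\delta_{jk}$. Substitution: $(F\circ G)^i(z)=\sum_w f_w^i\,G^{w(1)}(z)\cdots G^{w(q)}(z)$, the sum over nonempty words $w$ with $q=|w|$. *)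

(* Defs.v *)
From HB Require Import structures.
From mathcomp Require Import all_boot all_order all_algebra.
From mathcomp Require Import Rstruct.
From mathcomp Require Import complex.
Set Implicit Arguments. Unset Strict Implicit. Unset Printing Implicit Defensive.
Import Order.TTheory GRing.Theory Num.Theory.
Local Open Scope ring_scope.

Definition Cplx : fieldType := (Rdefinitions.R)[i].

(* A formal power series in N non-commuting variables z_0,...,z_{N-1}
   (commuting with A) is given by its coefficient function on words:
   s u is the coefficient of z_u.  An N-tuple of series is a function
   'I_N -> (seq 'I_N -> A), F j = F^j. *)
Definition series_tuple (N : nat) (A : Type) := 'I_N -> seq 'I_N -> A.

Definition Gdif (N : nat) (A : nzRingType) (F : series_tuple N A) : Prop :=
  forall j : 'I_N,
    F j [::] = 0 /\ (forall k : 'I_N, F j [:: k] = (j == k)%:R).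

(* Coefficient of z_v in the product G^{w(1)} ... G^{w(q)} of series
   (variables commute with coefficients, so (a z_u)(b z_u') = ab z_{uu'}). *)
Fixpoint prod_coef (N : nat) (A : nzRingType) (G : series_tuple N A)
    (w : seq 'I_N) (v : seq 'I_N) : A :=
  match w with
  | [::] => if v == [::] then 1 else 0
  | j :: w' => \sum_(k < (size v).+1) G j (take k v) * prod_coef G w' (drop k v)
  end.

(* Substitution (F o G)^i = sum_{w nonempty} f^i_w G^{w(1)} ... G^{w(q)}.  When G has zero constant terms (as for G in Gdif),
   the product G^{w(1)}...G^{w(q)} has no terms of degree < q, so only
   words w with 1 <= |w| <= |v| contribute to z_v; the sum is finite. *)
Definition subst (N : nat) (A : nzRingType) (F G : series_tuple N A)
  : series_tuple N A :=
  fun i v => \sum_(1 <= q < (size v).+1) \sum_(t : q.-tuple 'I_N)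
               F i (tval t) * prod_coef G (tval t) v.

Definition id_series (N : nat) (A : nzRingType) : series_tuple N A :=
  fun j v => if v == [:: j] then 1 else 0.

(* Main.v *)
Require Import Defs.
From HB Require Import structures.
From mathcomp Require Import all_boot all_order all_algebra zify ring.
Set Implicit Arguments. Unset Strict Implicit. Unset Printing Implicit Defensive.
Import GRing.Theory.
Local Open Scope ring_scope.

Lemma sum_tupleS (V : nmodType) (I : finType) q (f : q.+1.-tuple I -> V) :
  \sum_(t : q.+1.-tuple I) f t = \sum_(x : I) \sum_(t : q.-tuple I) f (cons_tuple x t).
Proof.
rewrite pair_big /=.
rewrite (reindex (fun p : I * q.-tuple I => (cons_tuple p.1 p.2))) //=.
exists (fun t : q.+1.-tuple I => (thead t, behead_tuple t)).
  by move=> [x t] _ /=; congr pair; apply: val_inj.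
by move=> t _ /=; apply: val_inj; rewrite /= [in RHS](tuple_eta t).
Qed.

Fixpoint Sf (N : nat) (A : nzRingType) (Q : series_tuple N A) (q : nat)
   (v : seq 'I_N) (P : seq 'I_N -> A) : A :=
  match q with
  | 0 => P [::] * (if v == [::] then 1 else 0)
  | q'.+1 => \sum_(k < (size v).+1) \sum_(x : 'I_N)
              Sf Q q' (drop k v) (fun t => P (x :: t) * Q x (take k v))
  end.

Lemma Sf_eq N (A : nzRingType) (Q : series_tuple N A) q v P :
  \sum_(t : q.-tuple 'I_N) P (tval t) * prod_coef Q (tval t) v = Sf Q q v P.
Proof.
elim: q v P => [|q IH] v P /=.
  by rewrite (big_pred1 [tuple]) //= => t; rewrite [t]tuple0 /= eqxx.
rewrite sum_tupleS /= [RHS]exchange_big /=; apply: eq_bigr => x _.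
rewrite -[RHS](eq_bigr _ (fun k _ => IH _ _)) /=.
rewrite exchange_big /=; apply: eq_bigr => t _.
rewrite mulr_sumr; apply: eq_bigr => k _.
by rewrite mulrA.
Qed.

Lemma Sf_eq0 N (A : nzRingType) (Q : series_tuple N A) q v P :
  (forall t, size t = q -> P t = 0) -> Sf Q q v P = 0.
Proof.
move=> H; rewrite -Sf_eq big1 // => t _; by rewrite H ?mul0r // size_tuple.
Qed.

Lemma Sf_ext N (A : nzRingType) (Q : series_tuple N A) q v P P' :
  (forall t, P t = P' t) -> Sf Q q v P = Sf Q q v P'.
Proof. by move=> H; rewrite -!Sf_eq; apply: eq_bigr => t _; rewrite H. Qed.

Lemma Sf_mul0 N (A : nzRingType) (Q : series_tuple N A) q v (f : seq 'I_N -> A) :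
  Sf Q q v (fun t => f t * 0) = 0.
Proof. by apply: Sf_eq0 => t _; rewrite mulr0. Qed.

Lemma Sf_mul1 N (A : nzRingType) (Q : series_tuple N A) q v (f : seq 'I_N -> A) :
  Sf Q q v (fun t => f t * 1) = Sf Q q v f.
Proof. by apply: Sf_ext => t; rewrite mulr1. Qed.

Lemma Sf1 N (A : nzRingType) (Q : series_tuple N A) v P :
  Sf Q 1 v P = \sum_(x < N) P [:: x] * Q x v.
Proof.
rewrite /= big_ord_recr /= drop_size take_size eqxx.
rewrite big1 ?add0r; last first.
  move=> k _; apply: big1 => x _.
  case: eqP => [/(congr1 size)|]; last by rewrite mulr0.
  by rewrite size_drop /= => /eqP; rewrite subn_eq0 leqNgt ltn_ord.
by apply: eq_bigr => x _; rewrite mulr1.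
Qed.

Lemma Sf2 N (A : nzRingType) (Q : series_tuple N A) v P :
  Sf Q 2 v P = \sum_(k < (size v).+1) \sum_(x < N) \sum_(y < N)
     P [:: x; y] * Q x (take k v) * Q y (drop k v).
Proof.
change (\sum_(k < (size v).+1) \sum_(x < N)
   Sf Q 1 (drop k v) (fun t => P (x :: t) * Q x (take k v)) = \sum_(k < (size v).+1) \sum_(x < N) \sum_(y < N)
     P [:: x; y] * Q x (take k v) * Q y (drop k v)).
apply: eq_bigr => k _; apply: eq_bigr => x _; rewrite Sf1.
by [].
Qed.

Lemma subst_Sf N (A : nzRingType) (F G : series_tuple N A) i v :
  subst F G i v = \sum_(1 <= q < (size v).+1) Sf G q v (F i).
Proof. by apply: eq_bigr => q _; rewrite -Sf_eq. Qed.

Lemma sum_one (A : nzRingType) N (c : 'I_N) (f : 'I_N -> A) :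
  (forall x, x != c -> f x = 0) -> \sum_(x < N) f x = f c.
Proof.
move=> H; rewrite (bigD1 c) //= big1 ?addr0 // => x /H //.
Qed.

Lemma sum_two (A : nzRingType) N (c d : 'I_N) (f : 'I_N -> A) : c != d ->
  (forall x, x != c -> x != d -> f x = 0) -> \sum_(x < N) f x = f c + f d.
Proof.
move=> cd H; rewrite (bigD1 c) //= (bigD1 d) 1?eq_sym //= big1 ?addr0 //.
by move=> x /andP[xc xd]; apply: H.
Qed.

Definition oo n : 'I_n.+2 := ord0.
Definition ll n : 'I_n.+2 := Ordinal (isT : (1 < n.+2)%N).
Arguments oo {n}. Arguments ll {n}.

Lemma ol n : (@oo n == ll) = false. Proof. by []. Qed.
Lemma lo n : (@ll n == oo) = false. Proof. by []. Qed.

Definition Fs n (A : nzRingType) (a b : A) : series_tuple n.+2 A := fun j w =>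
  if w == [:: j] then 1
  else if w == [:: oo; oo] then (if j == oo then a else if j == ll then b else 0)
  else if w == [:: ll; oo] then (if j == oo then 1 else 0) else 0.


Lemma eqs_nc (T : eqType) (x : T) s : ([::] == x :: s) = false. Proof. by []. Qed.
Lemma eqs_cn (T : eqType) (x : T) s : (x :: s == [::]) = false. Proof. by []. Qed.
Lemma eqs_nn (T : eqType) : ([::] == [::] :> seq T) = true. Proof. by []. Qed.
Definition eqsE := (eqseq_cons, eqs_nc, eqs_cn, eqs_nn, andbT, andbF).

Lemma Fs_nil n (A : nzRingType) (a b : A) (j : 'I_n.+2) : Fs a b j [::] = 0.
Proof. by rewrite /Fs !eqsE. Qed.
Lemma Fs_1 n (A : nzRingType) (a b : A) (j k : 'I_n.+2) : Fs a b j [:: k] = (j == k)%:R.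
Proof. by rewrite /Fs !eqsE eq_sym; case: eqP. Qed.
Lemma Fs_3 n (A : nzRingType) (a b : A) (j x y z : 'I_n.+2) w : Fs a b j [:: x, y, z & w] = 0.
Proof. by rewrite /Fs !eqsE. Qed.
Lemma Fs_oo n (A : nzRingType) (a b : A) (j : 'I_n.+2) :
  Fs a b j [:: oo; oo] = if j == oo then a else if j == ll then b else 0.
Proof. by rewrite /Fs !eqsE !eqxx. Qed.
Lemma Fs_lo n (A : nzRingType) (a b : A) (j : 'I_n.+2) :
  Fs a b j [:: ll; oo] = if j == oo then 1 else 0.
Proof. by rewrite /Fs !eqsE !eqxx. Qed.
Lemma Fs_2z n (A : nzRingType) (a b : A) (j x y : 'I_n.+2) :
  ~~ (((x == oo) || (x == ll)) && (y == oo)) -> Fs a b j [:: x; y] = 0.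
Proof.
rewrite /Fs !eqsE; by case: (x == oo); case: (y == oo); case: (x == ll).
Qed.

Lemma FG_eq n (A : nzRingType) (a b : A) (G : series_tuple n.+2 A) (i : 'I_n.+2) w :
  (2 <= size w)%N ->
  subst (Fs a b) G i w = G i w + \sum_(k < (size w).+1)
    (Fs a b i [:: oo; oo] * G oo (take k w) * G oo (drop k w)
     + Fs a b i [:: ll; oo] * G ll (take k w) * G oo (drop k w)).
Proof.
move=> hw; rewrite subst_Sf.
case: w hw => [|x [|y w]] // _.
rewrite big_ltn // big_ltn //.
rewrite [X in _ + (_ + X)]big_nat_cond big1 ?addr0; last first.
  move=> q /andP[/andP[q3 _] _]; apply: Sf_eq0 => t st.
  by case: t st => [|x1 [|x2 [|x3 t]]] st; rewrite ?Fs_3 //; move: q3; rewrite -st.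
congr (_ + _).
  rewrite Sf1 (sum_one (c := i)) ?Fs_1 ?eqxx ?mul1r // => z zi.
  by rewrite Fs_1 eq_sym (negbTE zi) mul0r.
rewrite Sf2; apply: eq_bigr => k _.
rewrite (sum_two (c := oo) (d := ll)) //; last first.
  move=> z z1 z2; apply: big1 => u _; rewrite Fs_2z ?mul0r //.
  by rewrite (negbTE z1) (negbTE z2).
congr (_ + _).
  by rewrite (sum_one (c := oo)) // => u u1; rewrite Fs_2z ?mul0r // ?(negbTE u1) ?andbF.
by rewrite (sum_one (c := oo)) // => u u1; rewrite Fs_2z ?mul0r // ?(negbTE u1) ?andbF.
Qed.

Lemma SfF n (A : nzRingType) (a b : A) q (v : seq 'I_n.+2) P :
  all (fun y => y == oo) v ->
  Sf (Fs a b) q.+1 v P = \sum_(k < (size v).+1)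
   (Sf (Fs a b) q (drop k v) (fun t => P (oo :: t) * Fs a b oo (take k v))
  + Sf (Fs a b) q (drop k v) (fun t => P (ll :: t) * Fs a b ll (take k v))).
Proof.
move=> Hv.
change (\sum_(k < (size v).+1) \sum_(x < n.+2)
   Sf (Fs a b) q (drop k v) (fun t => P (x :: t) * Fs a b x (take k v)) =
   \sum_(k < (size v).+1)
   (Sf (Fs a b) q (drop k v) (fun t => P (oo :: t) * Fs a b oo (take k v))
  + Sf (Fs a b) q (drop k v) (fun t => P (ll :: t) * Fs a b ll (take k v)))).
apply: eq_bigr => k _; rewrite (sum_two (c := oo) (d := ll)) // => x x1 x2.
apply: Sf_eq0 => t _.
have hw : (take k v == [:: x]) = false.
  apply/negbTE/eqP => e.
  have : x \in take k v by rewrite e mem_seq1.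
  by move/mem_take/(allP Hv); rewrite (negbTE x1).
by rewrite /Fs hw (negbTE x1) (negbTE x2) !if_same mulr0.
Qed.

Lemma Sf0 N (A : nzRingType) (Q : series_tuple N A) v P :
  Sf Q 0 v P = P [::] * (if v == [::] then 1 else 0).
Proof. by []. Qed.

Lemma Fs_o_o n (A : nzRingType) (a b : A) : Fs a b (@oo n) [:: oo] = 1.
Proof. by rewrite Fs_1 eqxx. Qed.
Lemma Fs_l_o n (A : nzRingType) (a b : A) : Fs a b (@ll n) [:: oo] = 0.
Proof. by rewrite Fs_1 lo. Qed.
Lemma Fs_o_oo n (A : nzRingType) (a b : A) : Fs a b (@oo n) [:: oo; oo] = a.
Proof. by rewrite Fs_oo eqxx. Qed.
Lemma Fs_l_oo n (A : nzRingType) (a b : A) : Fs a b (@ll n) [:: oo; oo] = b.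
Proof. by rewrite Fs_oo lo eqxx. Qed.
Lemma Fs_o_lo n (A : nzRingType) (a b : A) : Fs a b (@oo n) [:: ll; oo] = 1.
Proof. by rewrite Fs_lo eqxx. Qed.
Lemma Fs_l_lo n (A : nzRingType) (a b : A) : Fs a b (@ll n) [:: ll; oo] = 0.
Proof. by rewrite Fs_lo lo. Qed.

Lemma Sf_short N (A : nzRingType) (Q : series_tuple N A) q v P :
  (forall x, Q x [::] = 0) -> (size v < q)%N -> Sf Q q v P = 0.
Proof.
move=> HQ; elim: q v P => [//|q IH] v P hv.
apply: big1 => k _; apply: big1 => x _.
case: (posnP k) => [k0|kp].
  by apply: Sf_eq0 => t _; rewrite k0 take0 HQ mulr0.
apply: IH; rewrite size_drop.
move: hv kp; case: k => k /= hk; lia.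
Qed.

Arguments Sf : simpl never.

Lemma Sf_shortF n (A : nzRingType) (a b : A) q (v : seq 'I_n.+2) P :
  (size v < q)%N -> Sf (Fs a b) q v P = 0.
Proof. by apply: Sf_short => x; rewrite Fs_nil. Qed.


Ltac simpF := rewrite ?(Fs_nil, Fs_o_o, Fs_l_o, Fs_o_oo, Fs_l_oo, Fs_3, Sf_mul0, Sf_mul1, Sf0,
   eqs_nc, eqs_cn, eqs_nn, mulr0, mulr1, add0r, addr0) /=.

Ltac expandF := repeat match goal with |- context [Sf (Fs ?a ?b) ?q ?v ?P] =>
  first [ rewrite (@Sf_shortF _ _ a b q v P); [|by []]
        | rewrite (@SfF _ _ a b _ v P); [|by rewrite /= ?eqxx];
          rewrite /= !big_ord_recl big_ord0 /=; simpF ] end.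

Ltac simpG G0 G1 H := rewrite ?(big_ord0, G0, G1, Fs_o_oo, Fs_l_oo, Fs_o_lo, Fs_l_lo, eqxx, ol, lo) /= in H;
  rewrite ?(big_ord0, mulr1n, mulr0n, mulr0, mul0r, mulr1, mul1r, add0r, addr0) in H.

Lemma core n (A : nzRingType) (a b : A) (G : series_tuple n.+2 A) :
  Gdif G -> subst G (Fs a b) = @id_series _ A -> subst (Fs a b) G = @id_series _ A ->
  a * a = 0 -> b * b = 0 ->
  - (b * a) +
  (b * a + (b * a + a * b) + (b * a - (- a - a) * b) -
   (a * b + (b * a + (a * b - (- (b * a) - b * a))))) = 0.
Proof.
move=> HG HGF HFG haa hbb.
have G0 : forall j, G j [::] = 0 by move=> j; case: (HG j).
have G1 : forall j k, G j [:: k] = (j == k)%:R by move=> j k; case: (HG j).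
have E : forall i w, (2 <= size w)%N -> w != [:: i] ->
   G i w + \sum_(k < (size w).+1)
    (Fs a b i [:: oo; oo] * G oo (take k w) * G oo (drop k w)
     + Fs a b i [:: ll; oo] * G ll (take k w) * G oo (drop k w)) = 0.
  by move=> i w hw hi; rewrite -FG_eq // HFG /id_series (negbTE hi).
have e1 := E oo [:: oo; oo] isT isT.
have e2 := E oo [:: oo; ll] isT isT.
have e3 := E oo [:: ll; oo] isT isT.
have e4 := E oo [:: ll; ll] isT isT.
have e5 := E ll [:: oo; oo] isT isT.
have e6 := E ll [:: oo; ll] isT isT.
have e7 := E ll [:: ll; oo] isT isT.
rewrite /= !big_ord_recl big_ord0 /= in e1 e2 e3 e4 e5 e6 e7.
simpG G0 G1 e1; simpG G0 G1 e2; simpG G0 G1 e3; simpG G0 G1 e4;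
simpG G0 G1 e5; simpG G0 G1 e6; simpG G0 G1 e7.
have sol : forall x y : A, x + y = 0 -> x = - y.
  by move=> x y h; apply/eqP; rewrite -addr_eq0 h.
move/sol: e1 => v1; move/sol: e3 => v3; move/sol: e5 => v5.
have f1 := E oo [:: oo; oo; oo] isT isT.
have f2 := E oo [:: ll; oo; oo] isT isT.
have f3 := E oo [:: oo; ll; oo] isT isT.
have f4 := E oo [:: oo; oo; ll] isT isT.
have f5 := E ll [:: oo; oo; oo] isT isT.
rewrite /= !big_ord_recl big_ord0 /= in f1 f2 f3 f4 f5.
simpG G0 G1 f1; simpG G0 G1 f2; simpG G0 G1 f3; simpG G0 G1 f4; simpG G0 G1 f5.
rewrite ?(v1, e2, v3, e4, v5, e6, e7) in f1 f2 f3 f4 f5.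
rewrite ?(mulrN, mulNr, mulrN1, mulN1r, haa, hbb, oppr0, mulr0, addr0, add0r) in f1 f2 f3 f4 f5.
move/sol: f1 => w1; move/sol: f2 => w2; move/sol: f3 => w3; move/sol: f5 => w5.
have g := E oo [:: oo; oo; oo; oo] isT isT.
rewrite /= !big_ord_recl big_ord0 /= in g.
simpG G0 G1 g.
rewrite ?(v1, e2, v3, e4, v5, e6, e7, w1, w2, w3, f4, w5) in g.
rewrite ?(mulrN, mulNr, mulrN1, mulN1r, haa, hbb, oppr0, mulr0, addr0, add0r, opprK) in g.
move/sol: g => g.
have h : subst G (Fs a b) oo [:: oo; oo; oo; oo] = 0 by rewrite HGF.
rewrite subst_Sf big_ltn // big_ltn // big_ltn // big_ltn // big_geq // addr0 in h.
move: h; expandF.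
rewrite ?(v1, e2, v3, e4, v5, e6, e7, w1, w2, w3, f4, w5, g).
rewrite ?(mulrN, mulNr, mulrN1, mulN1r, mulr1, mul1r, haa, hbb, oppr0, mulr0, mul0r, addr0, add0r, opprK, mulrA).
by [].
Qed.

Unset Implicit Arguments.

Theorem corollary5 (N : nat) (hN : (2 <= N)%N) :
  exists (A : algType Cplx) (F : series_tuple N A),
    Gdif F /\
    forall G H : series_tuple N A,
      Gdif G -> Gdif H ->
      subst G F = @id_series N A ->
      subst F H = @id_series N A ->
      G <> H.
Proof.
case: N hN => [|[|n]] // _.
pose a : 'M[Cplx]_2 := delta_mx 0 1.
pose b : 'M[Cplx]_2 := delta_mx 1 0.
exists ('M[Cplx]_2), (Fs a b); split.
  by move=> j; split; [rewrite Fs_nil | move=> k; rewrite Fs_1].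
move=> G H HG _ HGF HFH GH; move: HFH; rewrite -GH => HFG.
have haa : a * a = 0 by rewrite -mulmxE mul_delta_mx_0.
have hbb : b * b = 0 by rewrite -mulmxE mul_delta_mx_0.
have ab : a * b = delta_mx 0 0 by rewrite -mulmxE mul_delta_mx.
have ba : b * a = delta_mx 1 1 by rewrite -mulmxE mul_delta_mx.
have := core HG HGF HFG haa hbb.
rewrite ?(mulrDl, mulNr) ab ba.
move/(congr1 (fun M : 'M[Cplx]_2 => M 0 0)).
rewrite !mxE /= => h.
have : (1 : Cplx) = 0 by rewrite -[RHS]h; ring.
by move/eqP; rewrite oner_eq0.
Qed.
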